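(* Fix $p\in(0,1)$ and suppose that for each $t\in\mathbb N$ the graph $G_t$ is (marginally) a directed Erdős–Rényi random graph $G(n,p)$ on $n$ vertices, with no assumption on the joint distribution of $(G_t)_{t\in\mathbb N}$. Let $\mathcal A$ be any allcast algorithm (which may depend on the whole sequence $(G_t)$) and let $T^{\rm all}(\mathcal A)$ be the random number of rounds until all nodes hold all packets. Then for every $q\in(p,1)$, $$\mathbb P\Bigl(T^{\rm all}(\mathcal A)\le \tfrac1q\Bigr)\le \tfrac1q\, e^{-n(n-1)H(q;p)},$$ where $H(q;p)=q\log\frac qp+(1-q)\log\frac{1-q}{1-p}$.
   Context: Allcast model: each of the $n$ nodes initially holds one distinct packet. Time is divided into rounds $t=1,2,\ldots$. In each round every node broadcasts exactly one packet, which must be a packet it currently holds (its own or one received earlier); a broadcast by $u$ in round $t$ is received by $v$ iff $(u,v)\in E_t$, where $G_t=(V,E_t)$. A directed Erdős–Rényi random graph $G(n,p)$ has each of the $n(n-1)$ ordered pairs $(u,v)$, $u\ne v$, present as an edge independently with probability $p$. $H(q;p)$ is the Kullback–Leibler divergence of $\mathrm{Bern}(q)$ from $\mathrm{Bern}(p)$. *)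

(* Defs.v *)
From HB Require Import structures.
From mathcomp Require Import all_boot all_order all_algebra.
From mathcomp Require Import all_classical all_reals all_analysis.
Set Implicit Arguments. Unset Strict Implicit. Unset Printing Implicit Defensive.
Import Order.TTheory GRing.Theory Num.Theory.
Local Open Scope ring_scope.
Local Open Scope classical_set_scope.

(* A directed graph on the node set 'I_n: its set of ordered pairs (u,v), i.e. edges u -> v. *)
Definition graph (n : nat) := {set 'I_n * 'I_n}.

Definition loopless (n : nat) (g : graph n) : bool := [forall u : 'I_n, (u, u) \notin g].

(* An allcast algorithm: given the whole sequence of graphs (G_t)_t, it prescribes for
   each round t and node u the packet broadcast by u in round t.  Packets are identified
   with the node that initially holds them. *)
Definition algorithm (n : nat) := (nat -> graph n) -> nat -> 'I_n -> 'I_n.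

(* Packets held by v after t rounds (rounds are numbered 1,2,...). *)
Fixpoint holds (n : nat) (A : algorithm n) (Gs : nat -> graph n) (t : nat) (v : 'I_n)
  : {set 'I_n} :=
  match t with
  | 0 => [set v]
  | t'.+1 => holds A Gs t' v :|: [set A Gs t u | u in [set u : 'I_n | (u, v) \in Gs t]]%SET
  end.

Definition valid_algorithm (n : nat) (A : algorithm n) : Prop :=
  forall (Gs : nat -> graph n) (t : nat) (u : 'I_n), A Gs t.+1 u \in holds A Gs t u.

Definition allcast_done (n : nat) (A : algorithm n) (Gs : nat -> graph n) (k : nat) : bool :=
  [forall v : 'I_n, holds A Gs k v == [set: 'I_n]%SET].

Definition KL {R : realType} (q p : R) : R :=
  q * ln (q / p) + (1 - q) * ln ((1 - q) / (1 - p)).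

(* The random graph G : Omega -> graph n has the law of the directed Erdos-Renyi G(n,p):
   each of the n(n-1) ordered pairs u<>v is an edge independently with probability p. *)
Definition ER_distributed {R : realType} {d : measure_display} {Omega : measurableType d}
  (P : probability Omega R) (n : nat) (p : R) (G : Omega -> graph n) : Prop :=
  forall g : graph n,
    P [set w | G w = g] =
    (if loopless g then p ^+ #|g| * (1 - p) ^+ (n * (n - 1) - #|g|)%N else 0)%:E.

(* Main.v *)
Require Import Defs.
From HB Require Import structures.
From mathcomp Require Import all_boot all_order all_algebra.
From mathcomp Require Import all_classical all_reals all_analysis.
From mathcomp Require Import zify ring lra.
Import Order.TTheory GRing.Theory Num.Theory.
Set Implicit Arguments. Unset Strict Implicit. Unset Printing Implicit Defensive.

Definition indeg (n : nat) (g : graph n) (v : 'I_n) : nat := \sum_(u : 'I_n) ((u, v) \in g).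

Lemma card_indeg n (g : graph n) : \sum_v indeg g v = #|g|.
Proof.
rewrite /indeg exchange_big /= pair_bigA /=.
rewrite -sum1_card [RHS]big_mkcond /=.
by apply: eq_bigr => -[u v] _; case: ((u,v) \in g).
Qed.

Lemma holds_card n (A : algorithm n) Gs k v :
  (#|holds A Gs k v| <= 1 + \sum_(t < k) indeg (Gs t.+1) v)%N.
Proof.
elim: k => [|k IH] /=; first by rewrite cards1 big_ord0.
rewrite big_ord_recr /=.
apply: (leq_trans (leq_card_setU _ _)).
rewrite addnA leq_add //.
apply: (leq_trans (leq_imset_card _ _)).
rewrite /indeg -sum1dep_card big_mkcond /=; apply: eq_leq; apply: eq_bigr => u _; by case: ((u, v) \in Gs k.+1).

Qed.

Lemma done_count n (A : algorithm n) Gs k :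
  allcast_done A Gs k -> (n * (n - 1) <= \sum_(t < k) #|Gs t.+1|)%N.
Proof.
move=> /forallP H.
have Hv v : (n <= 1 + \sum_(t < k) indeg (Gs t.+1) v)%N.
  by have := holds_card A Gs k v; rewrite (eqP (H v)) cardsT card_ord.
have : (\sum_(v < n) n <= \sum_(v < n) (1 + \sum_(t < k) indeg (Gs t.+1) v))%N.
  by apply: leq_sum => v _; exact: Hv.
rewrite big_split /= exchange_big /=.
under [X in (_ <= _ + X)%N]eq_bigr => t _ do rewrite card_indeg.
rewrite !sum_nat_const card_ord /=.
set X := (\sum_(t < k) _)%N. 
move=> h; rewrite /muln /= in h *. nia.
Qed.

Lemma avg_arg (k N : nat) (a : nat -> nat) :
  (0 < N)%N -> (N <= \sum_(t < k) a t)%N -> exists t : 'I_k, (N <= k * a t)%N.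
Proof.
move=> N0 HN.
have k0 : (0 < k)%N.
  case: k HN => [|k] //; rewrite big_ord0; lia.
have ck : (0 < #|'I_k|)%N by rewrite card_ord.
have [t0 Ht0] := @bigop.eq_bigmax _ (fun t : 'I_k => a t) ck.
exists t0; rewrite -Ht0.
apply: (leq_trans HN).
have -> : (k * \max_(t < k) a t = \sum_(t < k) \max_(t < k) a t)%N by rewrite sum_nat_const card_ord.
apply: leq_sum => t _; exact: (@bigop.leq_bigmax _ (fun t : 'I_k => a t)).
Qed.

Definition offdiag (n : nat) : {set 'I_n * 'I_n} := [set e | e.1 != e.2]%SET.

Lemma card_offdiag n : #|offdiag n| = (n * (n - 1))%N.
Proof.
have E : offdiag n = (~: [set (u, u) | u : 'I_n])%SET.
  apply/setP => -[u v]; rewrite !inE /=.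
  apply/idP/idP.
  - move=> uv; apply/imsetP => -[w _ [eu ev]]; move: uv; by rewrite eu ev eqxx.
  - move=> /imsetP H; apply/negP => /eqP uv; apply: H; exists u => //; by rewrite uv.
have cE : #|[set (u, u) | u : 'I_n]%SET| = n.
  rewrite card_imset ?card_ord //; by move=> a b [].
have := cardsC [set (u, u) | u : 'I_n]%SET.
rewrite -E cE card_prod card_ord => h.
have -> : #|offdiag n| = (n * n - n)%N. { move: h; set a := #|offdiag n|. lia. }
by rewrite mulnBr muln1.
Qed.

Lemma looplessE n (g : graph n) : loopless g = (g \subset offdiag n).
Proof.
apply/idP/idP.
- move=> /forallP H; apply/fintype.subsetP => -[u v] Hg; rewrite inE /=; apply/negP => /eqP uv.
  move: Hg; rewrite uv => Hg; by move: (H v); rewrite Hg.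
- move=> /fintype.subsetP H; apply/forallP => u; apply/negP => /H; by rewrite inE /= eqxx.
Qed.

Local Open Scope ring_scope.

Lemma binom_loopless (R : comNzRingType) n (y z : R) :
  \sum_(g : graph n | loopless g) y ^+ #|g| * z ^+ (n * (n - 1) - #|g|)%N
  = (y + z) ^+ (n * (n - 1))%N.
Proof.
set D := offdiag n.
pose F (e : 'I_n * 'I_n) := if e \in D then y else 0.
pose G (e : 'I_n * 'I_n) := if e \in D then z else 1.
have := @bigA_distr R 0 1 *%R +%R _ F G.
have -> : \prod_e (F e + G e) = (y + z) ^+ (n * (n - 1))%N.
  rewrite -card_offdiag -prodr_const [RHS]big_mkcond /=.
  by apply: eq_bigr => e _; rewrite /F /G; case: (e \in D) => //; rewrite add0r.
move=> ->.
rewrite [RHS](bigID (fun J : {set _} => J \subset D)) /= [X in _ + X]big1 ?addr0; last first.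
  move=> J /fintype.subsetPn [e eJ eD].
  rewrite (bigD1 e) //= eJ /F (negbTE eD) mul0r //.
apply: eq_big => [g|J]; first by rewrite looplessE. rewrite looplessE => JD.
rewrite (bigID (fun e => e \in J)) /=.
congr (_ * _).
  rewrite -(prodr_const (mem J)); apply: eq_big => // e eJ; by rewrite eJ /F (fintype.subsetP JD e eJ).
have cJ : #|D :\: J| = (n * (n - 1) - #|J|)%N.
  by rewrite cardsD (finset.setIidPr JD) card_offdiag.
rewrite -cJ -prodr_const [RHS]big_mkcond /= [LHS]big_mkcond /=.
apply: eq_bigr => e _; rewrite /G !inE.
by case: (e \in J); case: (e \in D).
Qed.

Lemma KL_identity (R : realType) (p q : R) (N : nat) : 0 < p < 1 -> p < q < 1 ->
  expR (- (ln (q * (1 - p) / (p * (1 - q))) * q * N%:R)) * ((1 - p) / (1 - q)) ^+ N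
  = expR (- N%:R * KL q p).
Proof.
move=> /andP[p0 p1] /andP[pq q1].
have q0 : 0 < q by lra.
have a0 : 0 < q / p by apply: divr_gt0.
have b0 : 0 < (1 - p) / (1 - q) by apply: divr_gt0; lra.
have -> : q * (1 - p) / (p * (1 - q)) = (q / p) * ((1 - p) / (1 - q)).
  by field; lra.
rewrite lnM ?posrE // -{2}(lnK (b0 : (1 - p) / (1 - q) \in Num.pos)) -expRM_natl -expRD.
congr expR.
rewrite /KL.
have -> : (1 - q) / (1 - p) = ((1 - p) / (1 - q))^-1 by rewrite invf_div.
rewrite lnV ?posrE //.
ring.
Qed.

Lemma chernoff (R : realType) n (p q : R) : 0 < p < 1 -> p < q < 1 ->
  \sum_(g : graph n | loopless g && (q * (n * (n - 1))%N%:R <= #|g|%:R))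
     p ^+ #|g| * (1 - p) ^+ (n * (n - 1) - #|g|)%N
  <= expR (- (n * (n - 1))%N%:R * KL q p).
Proof.
move=> hp hq; have /andP[p0 p1] := hp; have /andP[pq q1] := hq.
set N := (n * (n - 1))%N.
set x := q * (1 - p) / (p * (1 - q)).
have x1 : 1 <= x.
  rewrite /x ler_pdivlMr; last by apply: mulr_gt0; lra.
  rewrite mul1r; nra.
have x0 : 0 < x by lra.
set s := ln x.
have s0 : 0 <= s by apply: ln_ge0.
set c := expR (- (s * q * N%:R)).
have step : forall g : graph n, q * N%:R <= #|g|%:R ->
    p ^+ #|g| * (1 - p) ^+ (N - #|g|) <= c * ((p * x) ^+ #|g| * (1 - p) ^+ (N - #|g|)).
  move=> g hg.
  have -> : c * ((p * x) ^+ #|g| * (1 - p) ^+ (N - #|g|))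
     = (p ^+ #|g| * (1 - p) ^+ (N - #|g|)) * expR (#|g|%:R * s - s * q * N%:R).
    rewrite expRD expRM_natl /s lnK ?posrE // /c exprMn; ring.
  rewrite -{1}[p ^+ #|g| * _]mulr1 ler_wpM2l //.
    by apply: mulr_ge0; apply: exprn_ge0; lra.
  rewrite -[X in X <= _]expR0 ler_expR subr_ge0.
  rewrite [_ * s]mulrC -mulrA; apply: ler_wpM2l => //.
apply: (le_trans (y := \sum_(g : graph n | loopless g) c * ((p * x) ^+ #|g| * (1 - p) ^+ (N - #|g|)))).
  rewrite [X in X <= _]big_mkcondr /=; apply: ler_sum => g _.
  case: ifP => hg; first exact: step.
  apply: mulr_ge0; first exact: expR_ge0.
  by apply: mulr_ge0; apply: exprn_ge0; [apply: mulr_ge0|]; lra.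
rewrite -mulr_sumr binom_loopless.
have -> : p * x + (1 - p) = (1 - p) / (1 - q) by rewrite /x; field; lra.
by rewrite /c /s /x KL_identity.
Qed.

Local Open Scope classical_set_scope.

Lemma measure_seq (R : realType) (d : measure_display) (Omega : measurableType d)
  (P : probability Omega R) (T : eqType) (X : Omega -> T) :
  (forall g, measurable [set w | X w = g]) -> forall s : seq T,
  measurable [set w | X w \in s] /\
  (P [set w | X w \in s] <= \sum_(g <- s) P [set w | X w = g])%E.
Proof.
move=> Xm; elim => [|a s [ms IH]].
  rewrite big_nil.
  have -> : [set w | X w \in [::]] = set0 by apply/seteqP; split => w //=.
  by rewrite measure0; split.
have -> : [set w | X w \in a :: s] = [set w | X w = a] `|` [set w | X w \in s].
  apply/seteqP; split => w /=; rewrite in_cons.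
    by case/orP => [/eqP ->|h]; [left|right].
  by case => [->|->]; rewrite ?eqxx ?orbT.
split; first exact: measurableU.
rewrite big_cons; apply: (le_trans (measureU2 _ _ _)) => //.
by apply: leeD.
Qed.

Theorem corollary1 (R : realType) (d : measure_display) (Omega : measurableType d)
  (P : probability Omega R) (n : nat) (p : R) (G : nat -> Omega -> graph n)
  (A : algorithm n) (q : R) :
  0 < p < 1 ->
  (forall (t : nat) (g : graph n), measurable [set w | G t w = g]) ->
  (forall t : nat, ER_distributed P p (G t)) ->
  valid_algorithm A ->
  (forall k : nat, measurable [set w | allcast_done A (fun t => G t w) k]) ->
  p < q < 1 ->
  (P [set w | exists k : nat, (k%:R <= q^-1)%R /\ allcast_done A (fun t => G t w) k]
    <= (q^-1 * expR (- (n * (n - 1))%:R * KL q p))%:E)%E.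
Proof.
move=> hp Gm ER _ Dm hq.
have /andP[p0 p1] := hp; have /andP[pq q1] := hq.
have q0 : 0 < q by lra.
set N := (n * (n - 1))%N.
set S := [set w | _].
have Sm : measurable S.
  have -> : S = \bigcup_(k in [set k : nat | (k%:R <= q^-1)%R])
                  [set w | allcast_done A (fun t => G t w) k].
    apply/seteqP; split => w /=.
      by move=> [k [hk hd]]; exists k.
    by move=> [k hk hd]; exists k.
  by apply: bigcup_measurable => k _; exact: Dm.
set c := expR (- N%:R * KL q p).
have c0 : 0 <= c by apply: expR_ge0.
have qi1 : 1 <= q^-1 by rewrite invf_ge1 //; lra.
have [N0|Npos] := eqVneq N 0%N.
  apply: (le_trans (probability_le1 P Sm)).
  by rewrite /c N0 /= mulr0n oppr0 mul0r expR0 mulr1 lee_fin.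
have Npos' : (0 < N)%N by rewrite lt0n.
set K := Num.truncn q^-1.
set Ss := seq.filter (fun g : graph n => (q * N%:R <= #|g|%:R)%R) (enum (graph n)).
pose E (t : nat) := [set w | G t.+1 w \in Ss].
have Em : forall t, measurable (E t).
  by move=> t; have [] := measure_seq P (Gm t.+1) Ss.
have sub : S `<=` \big[setU/set0]_(t < K) E t.
  move=> w [k [hk hd]].
  have := done_count hd => hsum.
  have [t ht] := @avg_arg k N (fun t => #|G t.+1 w|) Npos' hsum.
  rewrite -bigcup_mkord; exists t.
    rewrite /= Num.Theory.truncn_ge_nat; last by lra.
    apply: le_trans hk; rewrite ler_nat; exact: ltn_ord.
  rewrite /E /= mem_filter mem_enum andbT.
  have qk : q * k%:R <= 1.
    have := ler_wpM2l (ltW q0) hk; by rewrite mulfV ?gt_eqF.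
  have hR : (N%:R <= k%:R * #|G t.+1 w|%:R :> R).
    by rewrite -natrM ler_nat.
  have m0 : (0 <= #|G t.+1 w|%:R :> R) by [].
  nra.
apply: (le_trans (content_subadditive P (fun k _ => Em k) Sm sub)).
apply: (@le_trans _ _ (\sum_(t < K) c%:E)%E).
  apply: lee_sum => t _.
  have [_ h] := measure_seq P (Gm t.+1) Ss.
  apply: (le_trans h).
  rewrite /Ss big_filter.
  under eq_bigr => g _ do rewrite (ER t.+1 g).
  rewrite sumEFin lee_fin.
  rewrite -big_mkcondr big_enum_cond /=.
  have H := chernoff n hp hq.
  apply: (le_trans _ H); rewrite le_eqVlt; apply/orP; left; apply/eqP.
  by apply: eq_big => // g; rewrite andbC.
rewrite (sumEFin _ _ (fun=> c)) lee_fin sumr_const card_ord -mulr_natl.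
apply: ler_wpM2r => //.
by rewrite Num.Theory.truncn_le; lra.
Qed.
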